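(* Let $G$ be a graph with a hole cover $\mathcal C$ satisfying the NC property in $G$, and let $u,w\in\mathcal C$ be adjacent in $G$. Then there is no vertex $v$ such that both $uv$ and $wv$ are newly added edges, i.e. both belong to $E(\widehat G(\mathcal C))\setminus E(G)$.
   Context: All graphs are finite and simple. A hole of $G$ is an induced cycle of length at least $4$; $\mathcal H(G)$ is the set of holes of $G$ and $\mathcal H(G,u)$ the set of holes containing $u$. A hole cover of $G$ is a nonempty $X\subseteq V(G)$ meeting every hole. A vertex $u$ satisfies the NC property in $G$ if there are no holes $H\in\mathcal H(G,u)$, $H'\in\mathcal H(G)\setminus\mathcal H(G,u)$ sharing two consecutive edges (two distinct edges with a common end vertex lying on both). A set $\mathcal C$ satisfies the NC property in $G$ if each of its vertices does and every hole contains at most one vertex of $\mathcal C$. Locally chordalizing all holes in $\mathcal H(G,u)$ by $u$ means adding all edges $uw$ with $w\ne u$ lying on some hole in $\mathcal H(G,u)$. For a hole cover $\mathcal C=\{u_1,\dots,u_k\}$ satisfying the NC property in $G$, set $G_0=G$, let $G_i$ be obtained from $G_{i-1}$ by locally chordalizing all holes in $\mathcal H(G_{i-1},u_i)$ by $u_i$, and put $\widehat G(\mathcal C)=G_k$ (this graph is chordal and independent of the ordering of $\mathcal C$). Edges of $\widehat G(\mathcal C)$ not in $G$ are called newly added edges. *)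

(* Defs.v *)
(* Graphs: finite vertex type T, adjacency a Prop-valued
   relation (so that graphs obtained by adding edges "lying on some hole"
   need no decidability). *)
From mathcomp Require Import all_boot.
Set Implicit Arguments. Unset Strict Implicit. Unset Printing Implicit Defensive.

Definition graph (T : Type) := T -> T -> Prop.

Definition simple_graph (T : Type) (e : graph T) : Prop :=
  (forall x y, e x y -> e y x) /\ (forall x, ~ e x x).

(* H is (the vertex set of) a hole: an induced cycle of length n >= 4,
   given by an injective cyclic listing f : 'I_n -> T of its vertices, where
   f i and f j are adjacent iff they are consecutive modulo n. *)
Definition hole (T : finType) (e : graph T) (H : {set T}) : Prop :=
  exists n (f : 'I_n -> T),
    [/\ 4 <= n, injective f, H = [set f i | i in 'I_n] &
        forall i j : 'I_n,
          e (f i) (f j) <-> (val j = (val i).+1 %% n \/ val i = (val j).+1 %% n)].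

Definition hole_cover (T : finType) (e : graph T) (X : {set T}) : Prop :=
  X != set0 /\ forall H, hole e H -> exists2 x, x \in H & x \in X.

(* NC property of a vertex u: no hole H through u and hole H' avoiding u
   share two consecutive edges xy, yz (x <> z). Since holes are induced,
   an edge ab lies on a hole H iff a, b \in H and ab is an edge. *)
Definition NC_vertex (T : finType) (e : graph T) (u : T) : Prop :=
  ~ exists H H' x y z,
      [/\ hole e H, hole e H', u \in H, u \notin H' &
      [/\ x != z, e x y, e y z,
          [&& x \in H, y \in H & z \in H] & [&& x \in H', y \in H' & z \in H']]].

Definition NC_set (T : finType) (e : graph T) (C : {set T}) : Prop :=
  (forall u, u \in C -> NC_vertex e u) /\
  (forall H, hole e H -> #|H :&: C| <= 1).

Definition local_chordalize (T : finType) (e : graph T) (u : T) : graph T :=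
  fun x y => e x y \/
    (x <> y /\
     ((x = u /\ exists H, [/\ hole e H, u \in H & y \in H]) \/
      (y = u /\ exists H, [/\ hole e H, u \in H & x \in H]))).

Fixpoint chordalize_seq (T : finType) (e : graph T) (s : seq T) : graph T :=
  match s with
  | [::] => e
  | u :: s' => chordalize_seq (local_chordalize e u) s'
  end.

(* Main.v *)
Require Import Defs.
From mathcomp Require Import all_boot zify.
From Stdlib Require Import ClassicalEpsilon Classical.
Set Implicit Arguments. Unset Strict Implicit. Unset Printing Implicit Defensive.

Section Basic.
Variable T : finType.
Variable e : graph T.

Definition eb x y : bool := if excluded_middle_informative (e x y) then true else false.
Lemma ebP x y : reflect (e x y) (eb x y).
Proof. rewrite /eb; case: excluded_middle_informative => h; by constructor. Qed.

Definition reach (S : T -> Prop) (x z : T) :=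
  exists p, [/\ path eb x p, last x p = z, S x & forall y, y \in p -> S y].

Lemma reach_refl (S : T -> Prop) x : S x -> reach S x x.
Proof. by exists [::]. Qed.

Lemma reach_step (S : T -> Prop) x y z : S x -> e x y -> reach S y z -> reach S x z.
Proof.
move=> Sx exy [p [pp lp Sy Sp]]; exists (y :: p); split=> //=.
  by rewrite pp andbT; apply/ebP.
move=> t; rewrite inE => /orP [/eqP -> //|]; exact: Sp.
Qed.

Lemma reach_trans (S : T -> Prop) x y z : reach S x y -> reach S y z -> reach S x z.
Proof.
move=> [p [pp lp Sx Sp]] [q [pq lq Sy Sq]]; exists (p ++ q); split => //.
- by rewrite cat_path pp lp pq.
- by rewrite last_cat lp.
move=> t; rewrite mem_cat => /orP [] ; [exact: Sp| exact: Sq].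
Qed.

Lemma reach_mono (S S' : T -> Prop) x z :
  (forall t, S t -> S' t) -> reach S x z -> reach S' x z.
Proof.
move=> h [p [pp lp Sx Sp]]; exists p; split => //; first exact: h.
by move=> y /Sp /h.
Qed.

Lemma reach_in (S : T -> Prop) x z : reach S x z -> S x /\ S z.
Proof.
move=> [p [pp <- Sx Sp]]; split => //.
have := mem_last x p; rewrite inE => /orP [/eqP -> //|]; exact: Sp.
Qed.

Lemma last_take_nth (x : T) p i : i <= size p -> last x (take i p) = nth x (x :: p) i.
Proof.
elim: p x i => [|a p IH] x [|i] //=.
move=> hi; rewrite (set_nth_default a) //; exact: IH.
Qed.

Lemma path_drop x p k : path eb x p -> k <= size p -> path eb (nth x (x :: p) k) (drop k p).
Proof.
move=> pp hk; move: pp; rewrite -{1}(cat_take_drop k p) cat_path => /andP [_].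
by rewrite last_take_nth.
Qed.

Lemma last_drop (x y : T) p k : k < size p -> last y (drop k p) = last x p.
Proof.
elim: p x y k => [|a p IH] x y [|k] //= hk.
by apply: IH.
Qed.

Hypothesis esym : forall x y, e x y -> e y x.

Lemma reach_sym (S : T -> Prop) x z : reach S x z -> reach S z x.
Proof.
move=> [p [pp <- Sx Sp]].
elim: p x pp Sx Sp => [|a p IH] x /= pp Sx Sp; first exact: reach_refl.
move/andP: pp => [/ebP exa pa].
apply: reach_trans (IH a pa _ _) _.
- by apply: Sp; rewrite inE eqxx.
- by move=> y hy; apply: Sp; rewrite inE hy orbT.
apply: (@reach_step _ a x x); [by apply: Sp; rewrite inE eqxx | exact: esym | exact: reach_refl].
Qed.

Definition chordless x (q : seq T) := forall i j, i.+1 < j -> j < size (x :: q) ->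
  ~~ eb (nth x (x :: q) i) (nth x (x :: q) j).

Lemma sp (S : T -> Prop) x z : reach S x z -> exists q,
  [/\ path eb x q, last x q = z, uniq (x :: q), (forall y, y \in q -> S y) & chordless x q].
Proof.
move=> [p [pp lp Sx Sp]].
have [n hs] : exists n, size p <= n by exists (size p).
elim: n p pp lp Sp hs => [|n IH] p pp lp Sp hs.
  move: hs; rewrite leqn0 => /nilP hp; subst p; exists [::]; split => //.
  by move=> i j /= h1 h2; lia.
move: lp; case: (shortenP pp) => p' pp' up' subp' lp'.
have sz : size p' <= size p.
  by apply: uniq_leq_size => //; move: up' => /= /andP [].
have Sp' : forall y, y \in p' -> S y by move=> y /subp' /Sp.
case: (classic (chordless x p')) => hc; first by exists p'.
have [i [j [hij hj hch]]] : exists i j, [/\ i.+1 < j, j < size (x :: p') &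
    eb (nth x (x :: p') i) (nth x (x :: p') j)].
  apply: NNPP => hn; apply: hc => i j h1 h2; apply/negP => hb; apply: hn.
  by exists i, j.
have hj1 : j.-1 < size p' by move: hj => /=; lia.
have ei : nth x (x :: p') j = nth x p' j.-1 by case: j hij {hj hch hj1} => //.
pose p'' := take i p' ++ drop j.-1 p'.
apply: (IH p'').
- rewrite cat_path take_path //= last_take_nth; last by move: hj => /=; lia.
  rewrite (drop_nth x hj1) /= -ei hch /=.
  have -> : j.-1.+1 = j by lia.
  apply: path_drop => //; move: hj => /=; lia.
- rewrite last_cat (last_drop x) //.
- move=> y; rewrite mem_cat => /orP [/mem_take|/mem_drop]; exact: Sp'.
- rewrite size_cat size_takel ?size_drop; last by move: hj => /=; lia.
  move: hs sz hj => /=; lia.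
Qed.

End Basic.
Definition cyc n i j := j = i.+1 %% n \/ i = j.+1 %% n.
Lemma modS k n : k < n -> k.+1 %% n = (if k.+1 == n then 0 else k.+1).
Proof. move=> h; case: eqP => [->|hn]; [exact: modnn| apply: modn_small; lia]. Qed.
Lemma cycE n i j : i < n -> j < n -> cyc n i j <->
  (j = i.+1 \/ i = j.+1 \/ (i = 0 /\ j.+1 = n) \/ (j = 0 /\ i.+1 = n)).
Proof. move=> hi hj; rewrite /cyc !modS //; do 2 case: eqP => ?; lia. Qed.

Lemma mod_shift n i a b : (i + a) %% n = (i + b) %% n <-> a %% n = b %% n.
Proof.
split=> h; apply/eqP; [rewrite -(eqn_modDl i) | rewrite (eqn_modDl i)]; exact/eqP.
Qed.

Lemma cyc_shift n i k l : k < n -> l < n ->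
  cyc n ((i + k) %% n) ((i + l) %% n) <-> cyc n k l.
Proof.
move=> hk hl.
have E : forall a b, b < n -> ((i + b) %% n = ((i + a) %% n).+1 %% n <-> b = a.+1 %% n).
  move=> a b hb; rewrite -addn1 modnDml -addnA addn1 mod_shift (modn_small hb).
  by [].
by rewrite /cyc !E.
Qed.

Section Holes.
Variable T : finType.
Variable e : graph T.

Definition holeL (H : {set T}) n (g : nat -> T) :=
  [/\ 4 <= n, (forall k l, k < n -> l < n -> g k = g l -> k = l),
      (forall x, x \in H <-> exists2 k, k < n & x = g k) &
      (forall k l, k < n -> l < n -> (e (g k) (g l) <-> cyc n k l))].

Lemma hole_L H : hole e H -> exists n g, holeL H n g.
Proof.
case=> n [f [h4 finj -> hf]].
case: n f h4 finj hf => [|n] f h4 finj hf; first by [].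
exists n.+1, (fun k => f (inord k)); split => //.
- move=> k l hk hl /finj /(congr1 (@nat_of_ord _)); rewrite !inordK //.
- move=> x; split.
    by case/imsetP => i _ ->; exists (nat_of_ord i) => //; rewrite inord_val.
  by case=> k hk ->; apply/imsetP; exists (inord k).
- by move=> k l hk hl; rewrite hf /= !inordK.
Qed.

Lemma L_hole H n g : holeL H n g -> hole e H.
Proof.
case=> h4 ginj gmem gadj; exists n, (fun i : 'I_n => g i); split => //.
- by move=> i j /ginj h; apply: val_inj; apply: h.
- apply/setP => x; apply/idP/imsetP.
    by case/gmem => k hk ->; exists (Ordinal hk).
  by case=> i _ ->; apply: (proj2 (gmem _)); exists (nat_of_ord i).
- by move=> i j; apply: gadj.
Qed.

Lemma holeL_rot H n g i : holeL H n g -> i < n ->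
  holeL H n (fun k => g ((i + k) %% n)).
Proof.
case=> h4 ginj gmem gadj hi; have n0 : 0 < n by lia.
split => //.
- move=> k l hk hl /ginj; rewrite !ltn_pmod // => /(_ isT isT).
  by rewrite mod_shift !modn_small.
- move=> x; rewrite gmem; split; case=> k hk ->.
    exists ((n - i + k) %% n); first by rewrite ltn_pmod.
    rewrite modnDmr addnA subnKC; last by lia.
    by rewrite modnDl modn_small.
  by exists ((i + k) %% n) => //; rewrite ltn_pmod.
- move=> k l hk hl; rewrite gadj ?ltn_pmod //; exact: cyc_shift.
Qed.

Lemma holeL_adj H n g k : holeL H n g -> k.+1 < n -> e (g k) (g k.+1).
Proof. case=> h4 _ _ gadj hk; apply/gadj; try lia; apply/cycE; lia. Qed.

Definition range (g : nat -> T) a c (s : T) := exists2 k, a <= k <= c & s = g k.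

Lemma reach_range H n g a d c : holeL H n g -> a + d <= c -> c < n ->
  reach e (range g a c) (g a) (g (a + d)).
Proof.
move=> hL; elim: d => [|d IH] h1 h2.
  by rewrite addn0; apply: reach_refl; exists a => //; lia.
apply: reach_trans (IH _ h2) _; first by lia.
rewrite addnS; apply: reach_step.
- by exists (a + d) => //; lia.
- apply: (holeL_adj hL); lia.
- by apply: reach_refl; exists (a + d).+1 => //; lia.
Qed.

Hypothesis esym : forall x y, e x y -> e y x.

Lemma reach_range2 H n g a c k l : holeL H n g -> a <= k <= c -> a <= l <= c -> c < n ->
  reach e (range g a c) (g k) (g l).
Proof.
move=> hL hk hl hc.
have R : forall m, a <= m <= c -> reach e (range g a c) (g a) (g m).
  move=> m hm; have -> : m = a + (m - a) by lia.
  by apply: (reach_range hL); lia.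
apply: reach_trans (R l hl); apply: reach_sym => //; exact: R.
Qed.

Lemma hole_nbrs H p : hole e H -> p \in H -> exists p1 p2,
  [/\ p1 \in H /\ p2 \in H, e p p1 /\ e p p2, p1 <> p2 /\ ~ e p1 p2,
      (forall z, z \in H -> e p z -> z = p1 \/ z = p2) &
      reach e (fun x => x \in H /\ x <> p) p1 p2].
Proof.
move=> /hole_L [n [g hL]] pH.
have [h4 _ gmem _] := hL; have [i hi ->] := (proj1 (gmem p) pH).
have hR := holeL_rot hL hi; set g' := fun k => _ in hR.
have -> : g i = g' 0 by rewrite /g' addn0 modn_small.
case: (hR) => _ ginj gm gadj.
have A1 : forall k l, k < n -> l < n -> e (g' k) (g' l) <->
  (l = k.+1 \/ k = l.+1 \/ (k = 0 /\ l.+1 = n) \/ (l = 0 /\ k.+1 = n)).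
  by move=> k l hk hl; rewrite gadj // cycE.
exists (g' 1), (g' n.-1); split.
- by split; apply/gm; [exists 1 | exists n.-1] => //; lia.
- by split; apply/A1; lia.
- split; first by move/ginj; lia.
  by move/A1; lia.
- move=> z /gm [k hk ->] /A1 h.
  have : k = 1 \/ k = n.-1 by lia.
  by case=> ->; [left|right].
- have -> : n.-1 = 1 + (n - 2) by lia.
  apply: reach_mono (reach_range (a := 1) (d := n - 2) (c := n.-1) hR _ _); try lia.
  move=> t [k hk ->]; split; first by apply/gm; exists k => //; lia.
  by move/ginj; lia.
Qed.

End Holes.

Section Holes2.
Variable T : finType.
Variable e : graph T.
Hypothesis esym : forall x y, e x y -> e y x.
Hypothesis eirr : forall x, ~ e x x.

Definition adjL n k l := (l = k.+1 \/ k = l.+1 \/ (k = 0 /\ l.+1 = n) \/ (l = 0 /\ k.+1 = n)).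

Lemma holeL_adjL H n g k l : holeL e H n g -> k < n -> l < n ->
  (e (g k) (g l) <-> adjL n k l).
Proof. by case=> _ _ _ gadj hk hl; rewrite gadj // cycE. Qed.

Record side (H : {set T}) (p q p1 q1 : T) (A : T -> Prop) : Prop := Side {
  sd_sub : forall s, A s -> s \in H /\ s <> p /\ s <> q;
  sd_p1 : A p1; sd_q1 : A q1;
  sd_ep : e p p1; sd_eq : e q q1;
  sd_conn : forall s t, A s -> A t -> reach e A s t;
  sd_np : forall s, A s -> e p s -> s = p1;
  sd_nq : forall s, A s -> e q s -> s = q1 }.

Lemma side_range H n g a c d i1 j1 : holeL e H n g -> c < n -> d < n ->
  a <= i1 <= c -> a <= j1 <= c -> ~ (a <= 0 <= c) -> ~ (a <= d <= c) ->
  adjL n 0 i1 -> adjL n d j1 ->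
  (forall k, a <= k <= c -> adjL n 0 k -> k = i1) ->
  (forall k, a <= k <= c -> adjL n d k -> k = j1) ->
  side H (g 0) (g d) (g i1) (g j1) (range g a c).
Proof.
move=> hL hc hd hi hj h0 hdd a0 ad n0 nd; have [h4 ginj gm gadj] := hL.
split.
- move=> s [k hk ->]; split; first by apply/gm; exists k => //; lia.
  by split; move/ginj; lia.
- by exists i1.
- by exists j1.
- by apply/(holeL_adjL hL) => //; lia.
- by apply/(holeL_adjL hL) => //; lia.
- move=> s t [k hk ->] [l hl ->]; exact: (reach_range2 esym hL).
- move=> s [k hk ->] /(holeL_adjL hL) h; rewrite (n0 k hk) //; apply: h; lia.
- move=> s [k hk ->] /(holeL_adjL hL) h; rewrite (nd k hk) //; apply: h; lia.
Qed.

Lemma hole_sides H p q : hole e H -> p \in H -> q \in H -> p <> q -> ~ e p q ->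
  exists A1 A2 p1 p2 q1 q2,
    [/\ side H p q p1 q1 A1, side H p q p2 q2 A2, p1 <> p2 & ~ e p1 p2].
Proof.
move=> /hole_L [n [g hL]] pH qH pq npq.
have [h4 _ gmem _] := hL; have [i hi ei] := (proj1 (gmem p) pH).
have hR := holeL_rot hL hi; set g' := fun k => _ in hR.
have ep : p = g' 0 by rewrite ei /g' addn0 modn_small.
clearbody g'; clear ei.
have [_ ginj gm gadj] := hR.
have [d hd eq] := (proj1 (gm q) qH).
subst p q.
have d0 : d <> 0 by move=> h; apply: pq; rewrite h.
have nd : ~ adjL n 0 d by move=> h; apply: npq; apply/(holeL_adjL hR) => //; lia.
exists (range g' 1 d.-1), (range g' d.+1 n.-1), (g' 1), (g' n.-1), (g' d.-1), (g' d.+1).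
split.
- move: (nd); rewrite /adjL => nd'.
  apply: (side_range hR); try (rewrite /adjL); try lia; try (move=> k hk; lia).
- move: (nd); rewrite /adjL => nd'.
  apply: (side_range hR); try (rewrite /adjL); try lia; try (move=> k hk; lia).
- by move/ginj; lia.
- by move/(holeL_adjL hR); rewrite /adjL; lia.
Qed.

Lemma mk_hole (S : T -> Prop) x y z : reach e S x z -> ~ S y -> e y x -> e y z ->
  ~ e x z -> x <> z -> (forall s, S s -> e y s -> s = x \/ s = z) ->
  exists H, [/\ hole e H, x \in H, y \in H, z \in H & forall h, h \in H -> h = y \/ S h].
Proof.
move=> hr nSy eyx eyz nxz xz hS.
have [Sx _] := reach_in hr.
have [q [pq lq uq Sq cq]] := sp hr.
have m3 : 3 <= size (x :: q).
  move: pq lq {uq Sq cq}.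
  case: q => [|a [|b q']] //=.
  by rewrite andbT => /ebP exa ea; case: nxz; rewrite -ea.
set r := x :: q.
have Sr : forall t, t \in r -> S t by move=> t; rewrite inE => /orP [/eqP -> //|]; exact: Sq.
have yr : y \notin r by apply/negP => /Sr.
set m := size r.
have em : m = (size q).+1 by [].
rewrite /= in m3.
have F3 : nth y r 0 = x by [].
have F3' : nth y r m.-1 = z by rewrite nth_last /r /= lq.
have F1 : forall k, k.+1 < m -> e (nth y r k) (nth y r k.+1).
  move=> k hk; move/(pathP y): pq => /(_ k); rewrite /m /r /= in hk.
  have hk' : k < size q by lia.
  by move=> /(_ hk') /ebP.
have F2 : forall i j, i.+1 < j -> j < m -> ~ e (nth y r i) (nth y r j).
  move=> i j hij hj; have hi : i < m by lia.
  move: (cq i j hij hj); rewrite -(set_nth_default y x hi) -(set_nth_default y x hj).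
  by move=> /negP h /ebP.
have F4 : forall k, k < m -> (e y (nth y r k) <-> k = 0 \/ k = m.-1).
  move=> k hk; split.
    move=> h; have := hS _ (Sr _ (mem_nth y hk)) h.
    have ur : uniq r by [].
    case=> E.
      by left; apply/eqP; rewrite -(nth_uniq y hk _ ur) ?E //; lia.
    by right; apply/eqP; rewrite -(nth_uniq y hk _ ur) ?E ?F3' //; lia.
  by case=> ->; rewrite ?F3 ?F3'.
set l := y :: r.
have ul : uniq l by rewrite /l /= yr.
have hL : holeL e [set t | t \in l] (size l) (nth y l).
  split.
  - by rewrite /l /r /=; lia.
  - move=> i j hi hj /eqP; rewrite nth_uniq //; exact/eqP.
  - move=> t; rewrite inE; split.
      by case/(nthP y) => k hk <-; exists k.
    by case=> k hk ->; apply: mem_nth.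
  - move=> i j hi hj; rewrite cycE //.
    rewrite /l /= in hi hj *; rewrite -/m in hi hj *.
    case: i hi => [|i] hi; case: j hj => [|j] hj /=.
    + by split; [move/eirr | lia].
    + rewrite F4; lia.
    + by split; [move/esym; rewrite F4; lia | move=> h; apply/esym/F4; lia].
    + split.
        move=> h.
        have : ~ (i.+1 < j) by move=> hh; exact: (F2 i j hh _ h).
        have : ~ (j.+1 < i) by move=> hh; exact: (F2 j i hh _ (esym h)).
        have : i <> j by move=> hh; rewrite hh in h; exact: eirr h.
        lia.
      move=> h; have : j = i.+1 \/ i = j.+1 by lia.
      case=> E; rewrite E; [apply: F1 | apply: esym; apply: F1]; lia.
exists [set t | t \in l]; split.
- exact: L_hole hL.
- by rewrite inE /l /r !inE eqxx orbT.
- by rewrite inE /l inE eqxx.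
- by rewrite inE /l inE -F3' mem_nth ?orbT //; lia.
- move=> h; rewrite inE /l inE => /orP [/eqP ->|/Sr]; by [left|right].
Qed.

End Holes2.

Lemma reach_sub (T : finType) (e1 e2 : graph T) (S : T -> Prop) x z :
  (forall s t, S s -> S t -> e1 s t -> e2 s t) -> reach e1 S x z -> reach e2 S x z.
Proof.
move=> h [p [pp lp Sx Sp]]; exists p; split => //.
elim: p x pp Sx Sp {lp} => [|a p IH] x //= /andP [/ebP ea pa] Sx Sp.
have Sa : S a by apply: Sp; rewrite inE eqxx.
rewrite IH // ?andbT; first by apply/ebP; exact: h.
by move=> y hy; apply: Sp; rewrite inE hy orbT.
Qed.

Section Core.
Variable T : finType.
Variable e : graph T.
Hypothesis esym : forall x y, e x y -> e y x.
Hypothesis eirr : forall x, ~ e x x.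

Definition onhole u x := exists H, [/\ hole e H, u \in H & x \in H].

Lemma NC_viol u H p p1 p2 (S : T -> Prop) : NC_vertex e u -> hole e H -> u \in H ->
  p \in H -> p1 \in H -> p2 \in H -> p <> u -> e p p1 -> e p p2 -> p1 <> p2 -> ~ e p1 p2 ->
  reach e S p1 p2 -> ~ S p -> ~ S u -> (forall s, S s -> e p s -> s = p1 \/ s = p2) -> False.
Proof.
move=> NCu hH uH pH p1H p2H pu ep1 ep2 p12 np12 hr nSp nSu hS.
have [H' [hH' p1H' pH' p2H' hH'S]] := mk_hole esym eirr hr nSp ep1 ep2 np12 p12 hS.
apply: NCu; exists H, H', p1, p, p2; split => //.
  apply/negP; case/hH'S => [E|]; [exact: pu| exact: nSu].
split => //; [exact/eqP | exact: esym | by rewrite p1H pH p2H | by rewrite p1H' pH' p2H'].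
Qed.

Lemma keycore u a b (W : T -> Prop) : NC_vertex e u -> onhole u a -> ~ e u a -> a <> u ->
  b <> u -> ~ e a b -> b <> a -> (e u b \/ (onhole u b /\ ~ e u b)) -> reach e W a b ->
  (forall z, W z -> z = a \/ z = b \/ (z <> u /\ ~ e u z /\ ~ onhole u z)) -> False.
Proof.
move=> NCu [H [hH uH aH]] nua au bu nab ba hb rab hW.
have [A1 [A2 [a1 [a2 [u1 [u2 [s1 s2 a12 na12]]]]]]] :=
  hole_sides esym hH aH uH au (fun h => nua (esym h)).
have [Tx [w [Tb Tw rbw euw hT]]] : exists (Tx : T -> Prop) w, [/\ Tx b, Tx w, reach e Tx b w,
   e u w & forall t, Tx t -> [/\ t <> u, t <> a, ~ e a t & (e u t -> t = w)]].
  case: hb => [eub|[[Hb [hHb uHb bHb]] nub]].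
    exists (fun t => t = b), b; split => //; first exact: reach_refl.
    by move=> t ->; split.
  have [B1 [B2 [b1 [b2 [w1 [w2 [t1 t2 b12 nb12]]]]]]] :=
    hole_sides esym hHb bHb uHb bu (fun h => nub (esym h)).
  have gen : forall B bd wd, side e Hb b u bd wd B -> (forall s, B s -> s <> a /\ ~ e a s) ->
     exists (Tx : T -> Prop) w, [/\ Tx b, Tx w, reach e Tx b w,
       e u w & forall t, Tx t -> [/\ t <> u, t <> a, ~ e a t & (e u t -> t = w)]].
    move=> B bd wd sd hB; exists (fun t => t = b \/ B t), wd; split.
    - by left.
    - by right; exact: sd_q1 sd.
    - apply: reach_step; [by left | exact: sd_ep sd |].
      apply: reach_mono (sd_conn sd (sd_p1 sd) (sd_q1 sd)); by right.
    - exact: sd_eq sd.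
    move=> t [->|Bt]; first by split => // /nub.
    have [_ [_ tu]] := sd_sub sd Bt; have [ta nat0] := hB t Bt; split => //.
    by move=> eut; apply: (sd_nq sd Bt eut).
  case: (classic (forall s, B1 s -> s <> a /\ ~ e a s)) => c1; first exact: (gen _ _ _ t1 c1).
  case: (classic (forall s, B2 s -> s <> a /\ ~ e a s)) => c2; first exact: (gen _ _ _ t2 c2).
  exfalso.
  have [x1 [Bx1 hx1]] : exists x, B1 x /\ (x = a \/ e a x).
    apply: NNPP => hn; apply: c1 => s Bs; split => [sa|eas]; apply: hn; exists s; tauto.
  have [x2 [Bx2 hx2]] : exists x, B2 x /\ (x = a \/ e a x).
    apply: NNPP => hn; apply: c2 => s Bs; split => [sa|eas]; apply: hn; exists s; tauto.
  have [b1H _] := sd_sub t1 (sd_p1 t1); have [b2H _] := sd_sub t2 (sd_p1 t2).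
  apply: (NC_viol (S := fun t => B1 t \/ B2 t \/ t = a) NCu hHb uHb bHb b1H b2H bu
      (sd_ep t1) (sd_ep t2) b12 nb12).
  - have r1 : reach e (fun t => B1 t \/ B2 t \/ t = a) b1 x1.
      by apply: reach_mono (sd_conn t1 (sd_p1 t1) Bx1) => t; left.
    have r2 : reach e (fun t => B1 t \/ B2 t \/ t = a) x2 b2.
      by apply: reach_mono (sd_conn t2 Bx2 (sd_p1 t2)) => t; right; left.
    have ra : reach e (fun t => B1 t \/ B2 t \/ t = a) x1 x2.
      have rax2 : reach e (fun t => B1 t \/ B2 t \/ t = a) a x2.
        case: hx2 => [->|e2]; first by apply: reach_refl; right; right.
        apply: (reach_step (y := x2)) e2 _; first by right; right.
        by apply: reach_refl; right; left.
      case: hx1 => [->//|e1].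
      by apply: (reach_step (y := a)) (esym e1) rax2; left.
    exact: reach_trans (reach_trans r1 ra) r2.
  - case=> [/(sd_sub t1)|[/(sd_sub t2)|]]; [tauto|tauto|exact: ba].
  - case=> [/(sd_sub t1)|[/(sd_sub t2)|]]; [tauto|tauto|move=> E; exact: au (sym_eq E)].
  - move=> s [/(sd_np t1) h|[/(sd_np t2) h| ->]]; [by move/h; left|by move/h; right|].
    by move/esym.
have R : forall A ai ui, side e H a u ai ui A -> reach e (fun t => A t \/ Tx t) ai w.
  move=> A ai ui sd.
  have rA : reach e (fun t => A t \/ Tx t) ai ui.
    by apply: reach_mono (sd_conn sd (sd_p1 sd) (sd_q1 sd)) => t; left.
  apply: reach_trans rA _.
  case: (classic (ui = w \/ e ui w)) => [[->|euw']|nuw].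
  - by apply: reach_refl; right.
  - apply: (reach_step (y := w)); [left; exact: sd_q1 sd | exact: euw' | by apply: reach_refl; right].
  have nuw' : ~ e ui w by tauto.
  have uiw : ui <> w by tauto.
  pose S := fun t => A t \/ W t \/ Tx t.
  have hr : reach e S ui w.
    have [Wa _] := reach_in rab.
    apply: (reach_trans (y := ai)).
      apply: reach_sym => //; apply: reach_mono (sd_conn sd (sd_p1 sd) (sd_q1 sd)).
      by move=> t; left.
    apply: reach_step (esym (sd_ep sd)) _; first by left; exact: sd_p1 sd.
    apply: (reach_trans (y := b)).
      by apply: reach_mono rab => t; right; left.
    by apply: reach_mono rbw => t; right; right.
  have nSu : ~ S u.
    case=> [/(sd_sub sd) [_ [_ //]]|[/hW [E|[E|[//]]]|/hT [//]]].
    - by apply: au; rewrite E.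
    - by apply: bu; rewrite E.
  have hS : forall s, S s -> e u s -> s = ui \/ s = w.
    move=> s [As|[Ws|Ts]] eus.
    - by left; exact: (sd_nq sd As eus).
    - case: (hW s Ws) => [E|[E|]]; last by tauto.
        by case: nua; rewrite -E.
      have [_ _ _ h] := hT b Tb; right; rewrite E; apply: h; by rewrite -E.
    - have [_ _ _ h] := hT s Ts; by right; apply: h.
  have [Hs [hHs uiH uHs wH hHsS]] := mk_hole esym eirr hr nSu (sd_eq sd) euw nuw' uiw hS.
  have noF : forall h, h \in Hs -> W h -> h = a \/ h = b.
    move=> h hHh Wh; case: (hW h Wh) => [|[|]]; try tauto.
    by case=> _ [_ []]; exists Hs.
  have aHs : a \notin Hs.
    apply/negP => aHs.
    have [p1 [p2 [[p1H p2H] [ep1 ep2] [p12 _] _ _]]] := hole_nbrs hHs aHs.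
    have P : forall p, p \in Hs -> e a p -> p = ai.
      move=> p pH eap; case: (hHsS p pH) => [E|[Ap|[Wp|Tp]]].
      - by case: nua; apply: esym; rewrite -E.
      - exact: (sd_np sd Ap eap).
      - case: (noF p pH Wp) => E; first by rewrite E in eap; case: (eirr eap).
        by rewrite E in eap.
      - by have [_ _ h _] := hT p Tp; case: (h eap).
    by apply: p12; rewrite (P p1) // (P p2).
  have [q1 [q2 [[q1H q2H] [eq1 eq2] [q12 _] hq rq]]] := hole_nbrs hHs uHs.
  have rq' : reach e (fun x => x \in Hs /\ x <> u) ui w.
    case: (hq ui uiH (sd_eq sd)) => E1; case: (hq w wH euw) => E2.
    - by case: uiw; rewrite E1 E2.
    - by rewrite E1 E2.
    - by rewrite E1 E2; exact: reach_sym.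
    - by case: uiw; rewrite E1 E2.
  apply: reach_mono rq' => t [tH tu].
  case: (hHsS t tH) => [//|[At|[Wt|Tt]]]; [by left| |by right].
  case: (noF t tH Wt) => E; first by move: aHs; rewrite -E tH.
  by right; rewrite E.
pose Sa := fun t => A1 t \/ A2 t \/ Tx t.
have r1 : reach e Sa a1 w by apply: reach_mono (R _ _ _ s1) => t [|]; rewrite /Sa; tauto.
have r2 : reach e Sa a2 w by apply: reach_mono (R _ _ _ s2) => t [|]; rewrite /Sa; tauto.
have [a1H _] := sd_sub s1 (sd_p1 s1); have [a2H _] := sd_sub s2 (sd_p1 s2).
apply: (NC_viol (S := Sa) NCu hH uH aH a1H a2H au (sd_ep s1) (sd_ep s2) a12 na12).
- exact: reach_trans r1 (reach_sym esym r2).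
- by case=> [/(sd_sub s1) [_ [h _]]|[/(sd_sub s2) [_ [h _]]|/hT [_ h _ _]]]; apply: h.
- by case=> [/(sd_sub s1) [_ [_ h]]|[/(sd_sub s2) [_ [_ h]]|/hT [h _ _ _]]]; apply: h.
- move=> s [/(sd_np s1) h|[/(sd_np s2) h|/hT [_ _ h _]]]; [by move/h; left|by move/h; right|].
  by move/h.
Qed.

End Core.

Section Core2.
Variable T : finType.
Variable e : graph T.
Hypothesis esym : forall x y, e x y -> e y x.
Hypothesis eirr : forall x, ~ e x x.


Lemma core u w v H1 H2 : NC_vertex e u -> NC_vertex e w ->
  (forall H, hole e H -> u \in H -> w \in H -> False) -> e u w ->
  hole e H1 -> u \in H1 -> v \in H1 -> w \notin H1 ->
  hole e H2 -> w \in H2 -> v \in H2 -> u \notin H2 ->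
  v <> u -> ~ e u v -> v <> w -> ~ e w v -> False.
Proof.
move=> NCu NCw noUW euw hH1 uH1 vH1 wH1 hH2 wH2 vH2 uH2 vu nuv vw nwv.
have uw : u <> w by move=> E; rewrite E in euw; exact: eirr euw.
have G : forall H x y (NCx : NC_vertex e x), hole e H -> x \in H -> v \in H -> y \notin H ->
    v <> x -> ~ e x v -> e x y -> ~ e y v -> v <> y ->
    exists A vd xd, side e H v x vd xd A /\ (forall s, A s -> ~ e y s).
  move=> H x y NCx hH xH vH yH vx nxv exy nyv vy.
  have [A1 [A2 [v1 [v2 [x1 [x2 [s1 s2 v12 nv12]]]]]]] :=
    hole_sides esym hH vH xH vx (fun h => nxv (esym h)).
  case: (classic (forall s, A1 s -> ~ e y s)) => c1; first by exists A1, v1, x1.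
  case: (classic (forall s, A2 s -> ~ e y s)) => c2; first by exists A2, v2, x2.
  exfalso.
  have [t1 [At1 et1]] : exists s, A1 s /\ e y s.
    by apply: NNPP => hn; apply: c1 => s As ys; apply: hn; exists s.
  have [t2 [At2 et2]] : exists s, A2 s /\ e y s.
    by apply: NNPP => hn; apply: c2 => s As ys; apply: hn; exists s.
  have [v1H _] := sd_sub s1 (sd_p1 s1); have [v2H _] := sd_sub s2 (sd_p1 s2).
  pose S := fun t => A1 t \/ A2 t \/ t = y.
  apply: (NC_viol esym eirr (S := S) NCx hH xH vH v1H v2H vx (sd_ep s1) (sd_ep s2) v12 nv12).
  - apply: (reach_trans (y := t1)).
      by apply: reach_mono (sd_conn s1 (sd_p1 s1) At1) => t; left.
    apply: (reach_step (y := y)); [by left | exact: esym et1|].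
    apply: (reach_step (y := t2)); [by right; right | exact: et2|].
    by apply: reach_mono (sd_conn s2 At2 (sd_p1 s2)) => t; right; left.
  - by case=> [/(sd_sub s1) [_ [h _]]|[/(sd_sub s2) [_ [h _]]|E]]; [apply: h|apply: h|apply: vy].
  - case=> [/(sd_sub s1) [_ [_ h]]|[/(sd_sub s2) [_ [_ h]]|E]]; [by apply: h|by apply: h|].
    by rewrite E in exy; exact: eirr exy.
  - move=> s [/(sd_np s1) h|[/(sd_np s2) h| ->]]; [by move/h; left|by move/h; right|].
    by move/esym.
have [A [vd [ud [sA nA]]]] := G H1 u w NCu hH1 uH1 vH1 wH1 vu nuv euw nwv vw.
have [B [vd' [wd [sB nB]]]] := G H2 w u NCw hH2 wH2 vH2 uH2 vw nwv (esym euw) nuv vu.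
pose S := fun t => B t \/ t = v \/ A t \/ t = w.
have [udH _] := sd_sub sA (sd_q1 sA).
have hr : reach e S w ud.
  apply: (reach_step (y := wd)); [by right; right; right | exact: sd_eq sB |].
  apply: (reach_trans (y := vd')).
    apply: reach_mono (sd_conn sB (sd_q1 sB) (sd_p1 sB)) => t; by left.
  apply: (reach_step (y := v)); [by left; exact: sd_p1 sB | exact: esym (sd_ep sB) |].
  apply: (reach_step (y := vd)); [by right; left | exact: sd_ep sA |].
  apply: reach_mono (sd_conn sA (sd_p1 sA) (sd_q1 sA)) => t; by right; right; left.
have nSu : ~ S u.
  case=> [/(sd_sub sB) [uH _]|[E|[/(sd_sub sA) [_ [_ h]]|E]]].
  - by rewrite uH in uH2.
  - by apply: vu.
  - by apply: h.
  - by apply: uw.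
have hS : forall s, S s -> e u s -> s = w \/ s = ud.
  move=> s [Bs|[->|[As|->]]] eus.
  - by case: (nB s Bs eus).
  - by case: nuv.
  - by right; exact: (sd_nq sA As eus).
  - by left.
have nwud : ~ e w ud by apply: nA; exact: sd_q1 sA.
have wud : w <> ud by move=> E; rewrite E udH in wH1.
have [Hs [hHs wHs uHs udHs _]] := mk_hole esym eirr hr nSu euw (sd_eq sA) nwud wud hS.
exact: noUW hHs uHs wHs.
Qed.

End Core2.

Lemma lc_simple (T : finType) (e : graph T) u :
  simple_graph e -> simple_graph (local_chordalize e u).
Proof.
case=> es ei; split.
  move=> x y [h|[xy [[xu hh]|[yu hh]]]]; [left; exact: es|right|right].
  - by split; [move=> E; apply: xy; rewrite E | right].
  - by split; [move=> E; apply: xy; rewrite E | left].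
by move=> x [h|[]]; [exact: ei h|].
Qed.

Lemma hole_agree (T : finType) (e1 e2 : graph T) H : hole e1 H ->
  (forall x y, x \in H -> y \in H -> (e1 x y <-> e2 x y)) -> hole e2 H.
Proof.
case=> n [f [h4 fi EH hf]] ag; exists n, f; split => // i j.
rewrite -ag ?hf // EH; apply/imsetP; by [exists i | exists j].
Qed.

Lemma key (T : finType) (e : graph T) u : simple_graph e -> NC_vertex e u ->
  forall H', hole (local_chordalize e u) H' -> forall x y, x \in H' -> y \in H' ->
  (local_chordalize e u x y <-> e x y).
Proof.
move=> se NCu; have [esym eirr] := se.
have [esym' eirr'] := lc_simple u se.
set e' := local_chordalize e u in esym' eirr' *.
move=> H' hH' x y xH yH; split; last by left.
have main : forall a, a \in H' -> u \in H' -> a <> u -> onhole e u a -> ~ e u a -> e' u a -> False.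
  move=> a aH uH au oa nua e'ua.
  have [p1 [p2 [[p1H p2H] [ep1 ep2] [p12 np12] hp rp]]] := hole_nbrs hH' uH.
  have [b [bH e'ub ab nab [rab Wb]]] : exists b, [/\ b \in H', e' u b, b <> a, ~ e' a b &
      reach e' (fun x => x \in H' /\ x <> u) a b /\
      forall z, z \in H' -> e' u z -> z = a \/ z = b].
    case: (hp a aH e'ua) => E; subst a.
    - exists p2; split; [done|done|exact: nesym p12|done|].
      by split; [exact: rp| move=> z zH /(hp z zH)].
    - exists p1; split; [done|done|done|by move/esym'|].
      split; first by apply: (reach_sym esym'); exact: rp.
      by move=> z zH /(hp z zH); tauto.
  have bu : b <> u by move=> E; rewrite E in e'ub; exact: eirr' e'ub.
  apply: (keycore esym eirr (W := fun x => x \in H' /\ x <> u) NCu oa nua au bu _ ab).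
  - by move=> h; apply: nab; left.
  - case: e'ub => [h|[_ [[_ ob]|[E _]]]]; first by left.
      by case: (classic (e u b)) => h; [left|right].
    by case: bu.
  - apply: reach_sub rab => s t [_ su] [_ tu]; case => [//|[_ [[E _]|[E _]]]].
      by case: su.
    by case: tu.
  - move=> z [zH zu].
    case: (classic (e' u z)) => h; first by case: (Wb z zH h); tauto.
    right; right; split => //; split; first by move=> h'; apply: h; left.
    by move=> oz; apply: h; right; split; [move=> E; apply: zu; rewrite E| left].
case=> [//|[xy [[xu ox]|[yu oy]]]].
- apply: NNPP => nxy; subst x; apply: (main y yH xH (nesym xy) ox nxy).
  by right; split => //; left.
- apply: NNPP => nxy; subst y; apply: (main x xH yH xy oy (fun h => nxy (esym _ _ h))).
  by right; split; [exact: nesym|left].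
Qed.

Definition Inv (T : finType) (e0 e : graph T) :=
  [/\ simple_graph e, (forall x y, e0 x y -> e x y),
      (forall x y, e x y -> e0 x y \/ exists H, [/\ hole e0 H, x \in H & y \in H]) &
      (forall H, hole e H -> forall x y, x \in H -> y \in H -> (e x y <-> e0 x y))].

Lemma NC_transfer (T : finType) (e0 e : graph T) c : Inv e0 e -> NC_vertex e0 c -> NC_vertex e c.
Proof.
case=> _ _ _ ag NC0 [H [H' [x [y [z [hH hH' cH cH' [xz exy eyz inH inH']]]]]]].
apply: NC0; exists H, H', x, y, z.
move: inH => /and3P [xH yH zH].
split => //; [exact: hole_agree (ag H hH) | exact: hole_agree (ag H' hH') |].
split => //; [by rewrite -(ag H hH) | by rewrite -(ag H hH) | by rewrite xH yH zH].
Qed.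

Lemma Inv_step (T : finType) (e0 e : graph T) c : Inv e0 e -> NC_vertex e0 c ->
  Inv e0 (local_chordalize e c).
Proof.
move=> I NC0; have NCe := NC_transfer I NC0.
case: I => se sub new ag; split.
- exact: lc_simple.
- by move=> x y /sub h; left.
- move=> x y [/new //|[xy [[xc [H [hH cH yH]]]|[yc [H [hH cH xH]]]]]].
  + right; exists H; split; [exact: hole_agree (ag H hH) | by rewrite xc | by []].
  + right; exists H; split; [exact: hole_agree (ag H hH) | by [] | by rewrite yc].
- move=> H hH x y xH yH.
  have k := key se NCe hH.
  have hHe : hole e H := hole_agree hH k.
  exact: iff_trans (k x y xH yH) (ag H hHe x y xH yH).
Qed.

Lemma chordalize_inv (T : finType) (e0 : graph T) s : forall e, Inv e0 e ->
  (forall c, c \in s -> NC_vertex e0 c) -> Inv e0 (chordalize_seq e s).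
Proof.
elim: s => [|c s IH] e I hs //=.
apply: IH; first by apply: Inv_step I (hs c _); rewrite inE eqxx.
by move=> d ds; apply: hs; rewrite inE ds orbT.
Qed.

Theorem lemma2p5 (T : finType) (e : graph T) (C : {set T}) (u w : T)
  (s : seq T) :
  simple_graph e ->
  hole_cover e C ->
  NC_set e C ->
  u \in C -> w \in C -> e u w ->
  uniq s -> [set x in s] = C ->
  ~ exists v : T,
      (chordalize_seq e s u v /\ ~ e u v) /\
      (chordalize_seq e s w v /\ ~ e w v).
Proof.
move=> se _ [NCv NCs] uC wC euw _ sC [v [[cuv nuv] [cwv nwv]]].
have [esym eirr] := se.
have I : Inv e (chordalize_seq e s).
  apply: chordalize_inv.
    split; [exact: se | by move=> x y h | by move=> x y h; left | by move=> *].
  by move=> c cs; apply: NCv; rewrite -sC inE.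
case: I => [[_ Eirr] _ new _].
have uw : u <> w by move=> E; rewrite E in euw; exact: eirr _ euw.
have noUW : forall H, hole e H -> u \in H -> w \in H -> False.
  move=> H hH uH wH; have := NCs H hH.
  have : 1 < #|H :&: C|.
    apply/card_gt1P; exists u, w; split; [by rewrite inE uH uC|by rewrite inE wH wC|].
    exact/eqP.
  lia.
case: (new u v cuv) => [//|[H1 [hH1 uH1 vH1]]].
case: (new w v cwv) => [//|[H2 [hH2 wH2 vH2]]].
have vu : v <> u by move=> E; rewrite E in cuv; exact: Eirr cuv.
have vw : v <> w by move=> E; rewrite E in cwv; exact: Eirr cwv.
apply: (core esym eirr (NCv u uC) (NCv w wC) noUW euw hH1 uH1 vH1 _ hH2 wH2 vH2)
  => //; apply/negP => h; [exact: noUW hH1 uH1 h | exact: noUW hH2 h wH2].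
Qed.
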